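(* The restriction of the projection $\pi:R\to R(F,H)$, $u\mapsto u^\eta$, to the center $Z(R)$ is an algebra isomorphism of $Z(R)$ onto its image $W(F,H)=\pi(Z(R))\subseteq R(F,H)$.
   Context: Let $f\in\mathbb{C}[H]$ be a polynomial. $R=R(f)$ is the associative $\mathbb{C}$-algebra generated by $E,F,H$ with relations $EF-FE=f(H)$, $HE-EH=E$, $HF-FH=-F$; the monomials $F^iH^jE^k$ form a basis of $R$. Let $R(E)=\mathbb{C}[E]$ and $R(F,H)$ the subalgebra generated by $F,H$ (with basis $F^iH^j$). Let $u\in\mathbb{C}[H]$ satisfy $f(H)=\tfrac12(u(H+1)-u(H))$ and $\Omega=2FE+u(H+1)$; the center $Z(R)$ is the polynomial ring $\mathbb{C}[\Omega]$. Fix an algebra homomorphism $\eta:R(E)\to\mathbb{C}$ with $\eta(E)\neq0$ and let $R_\eta(E)=\ker\eta$. Then $R=R(F,H)\oplus R\,R_\eta(E)$ as vector spaces; for $u\in R$, $u^\eta=\pi(u)$ denotes its $R(F,H)$-component. *)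

(* Defs.v *)
From HB Require Import structures.
From mathcomp Require Import all_boot all_order all_algebra.
From mathcomp Require Import complex.
From mathcomp Require Import Rstruct.
From Stdlib Require Import ClassicalEpsilon.
From Stdlib Require Rdefinitions.

Set Implicit Arguments.
Unset Strict Implicit.
Unset Printing Implicit Defensive.

Import GRing.Theory.
Local Open Scope ring_scope.

Notation C := (complex Rdefinitions.R).

Section Defs.
Variable A : algType C.
Variables E F H : A.

Definition peval (p : {poly C}) (a : A) : A :=
  \sum_(i < size p) p`_i *: a ^+ i.

Definition fH (f : {poly C}) : A := peval f H.

Definition Rf_relations (f : {poly C}) : Prop :=
  [/\ E * F - F * E = fH f, H * E - E * H = E & H * F - F * H = - F].

Definition mono (i j k : nat) : A := F ^+ i * H ^+ j * E ^+ k.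

Definition PBW_basis : Prop :=
  (forall x : A, exists (n : nat) (c : 'I_n -> 'I_n -> 'I_n -> C),
      x = \sum_(i < n) \sum_(j < n) \sum_(k < n) c i j k *: mono i j k)
  /\
  (forall (n : nat) (c : 'I_n -> 'I_n -> 'I_n -> C),
      \sum_(i < n) \sum_(j < n) \sum_(k < n) c i j k *: mono i j k = 0 ->
      forall i j k, c i j k = 0).

(* R(F,H): the subalgebra generated by F and H, i.e. the intersection of all
   subalgebras (sets containing 1, closed under +, *, scaling) containing F,H *)
Definition subalg_closed (S : A -> Prop) : Prop :=
  [/\ S 1, forall x y, S x -> S y -> S (x + y),
      forall x y, S x -> S y -> S (x * y) & forall (a : C) x, S x -> S (a *: x)].

Definition RFH (x : A) : Prop :=
  forall S : A -> Prop, subalg_closed S -> S F -> S H -> S x.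

(* R(E) = C[E] = { p(E) }.  The character eta : R(E) -> C with eta(E) = c is
   eta(p(E)) = p(c); its kernel R_eta(E) = { p(E) | p(c) = 0 }. *)
Definition RE_eta (c : C) (x : A) : Prop :=
  exists p : {poly C}, x = peval p E /\ p.[c] = 0.

(* R R_eta(E): the left ideal generated, i.e. finite sums of products r * y
   with r in R and y in R_eta(E). *)
Definition R_RE_eta (c : C) (x : A) : Prop :=
  exists (n : nat) (r y : 'I_n -> A),
    (forall i, RE_eta c (y i)) /\ x = \sum_(i < n) r i * y i.

(* u^eta: the R(F,H)-component of u in R = R(F,H) (+) R R_eta(E). *)
Definition proj_eta (c : C) (u : A) : A :=
  epsilon (inhabits 0) (fun v => RFH v /\ R_RE_eta c (u - v)).

Definition central (z : A) : Prop := forall x : A, z * x = x * z.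

End Defs.

(* Main.v *)
Require Import Defs.
From HB Require Import structures.
From mathcomp Require Import all_boot all_order all_algebra.
From mathcomp Require Import complex.
From mathcomp Require Import Rstruct.
From mathcomp Require Import zify.
From Stdlib Require Rdefinitions.
From Stdlib Require Import ClassicalEpsilon.

Import GRing.Theory Num.Theory.
Local Open Scope ring_scope.
Section Main.
Variable (f : {poly C}) (A : algType C) (E F H : A) (c : C).
Hypothesis Hrel : Rf_relations E F H f.
Hypothesis Hpbw : PBW_basis E F H.

Local Notation mono := (mono E F H).

Definition ms n (b : nat -> nat -> nat -> C) : A :=
  \sum_(0 <= i < n) \sum_(0 <= j < n) \sum_(0 <= k < n) b i j k *: mono i j k.
Definition bnd n (b : nat -> nat -> nat -> C) :=
  forall i j k, (n <= i)%N || (n <= j)%N || (n <= k)%N -> b i j k = 0.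
Definition Rep x b := exists n, bnd n b /\ x = ms n b.

Lemma pad1 {G : nat -> A} {n m : nat} : (n <= m)%N -> (forall i, (n <= i)%N -> G i = 0) ->
  \sum_(0 <= i < m) G i = \sum_(0 <= i < n) G i.
Proof.
move=> nm G0; rewrite (big_cat_nat (leq0n n) nm) /= [X in _ + X]big1_seq ?addr0 //.
by move=> i /andP[_]; rewrite mem_index_iota => /andP[hi _]; rewrite G0.
Qed.

Lemma bnd_le {n m b} : bnd n b -> (n <= m)%N -> bnd m b.
Proof.
move=> hb nm i j k h; apply: hb.
case/orP: h => [/orP[]|] h; rewrite ?(leq_trans nm h) ?orbT //.
Qed.

Lemma ms_pad {n m b} : bnd n b -> (n <= m)%N -> ms m b = ms n b.
Proof.
move=> hb nm; rewrite /ms (pad1 nm); last first.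
  by move=> i hi; apply: big1 => j _; apply: big1 => k _; rewrite hb ?scale0r // hi.
apply: eq_bigr => i _; rewrite (pad1 nm); last first.
  by move=> j hj; apply: big1 => k _; rewrite hb ?scale0r // hj orbT.
apply: eq_bigr => j _; rewrite (pad1 nm) // => k hk.
by rewrite hb ?scale0r // hk !orbT.
Qed.

Lemma ms_lin n a b (al : C) :
  ms n (fun i j k => al * a i j k + b i j k) = al *: ms n a + ms n b.
Proof.
rewrite /ms scaler_sumr -big_split /=; apply: eq_bigr => i _.
rewrite scaler_sumr -big_split; apply: eq_bigr => j _.
rewrite scaler_sumr -big_split; apply: eq_bigr => k _.
by rewrite scalerDl scalerA.
Qed.

Lemma ms0 b : ms 0 b = 0.
Proof. by rewrite /ms big_geq. Qed.

Lemma Rep0 : Rep 0 (fun _ _ _ => 0).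
Proof. by exists 0%N; split => //; rewrite ms0. Qed.

Lemma Rep_ext {x a b} : (forall i j k, a i j k = b i j k) -> Rep x a -> Rep x b.
Proof.
move=> e [n [hb ->]]; exists n; split.
  by move=> i j k h; rewrite -e hb.
rewrite /ms; apply: eq_bigr => i _; apply: eq_bigr => j _; apply: eq_bigr => k _.
by rewrite e.
Qed.

Lemma Rep_lin {x y a b} (al : C) : Rep x a -> Rep y b ->
  Rep (al *: x + y) (fun i j k => al * a i j k + b i j k).
Proof.
move=> [n [ha ->]] [m [hb ->]]; exists (maxn n m); split.
  move=> i j k h; rewrite (bnd_le ha (leq_maxl n m)) // (bnd_le hb (leq_maxr n m)) //.
  by rewrite mulr0 addr0.
rewrite ms_lin (ms_pad ha (leq_maxl n m)) (ms_pad hb (leq_maxr n m)) //.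
Qed.

Lemma rep_exists x : exists b, Rep x b.
Proof.
have [sp _] := Hpbw; have [n [cc ->]] := sp x.
case: n cc => [|n] cc.
  exists (fun _ _ _ => 0), 0%N; split; first by [].
  by rewrite ms0 big_ord0.
exists (fun i j k => if [&& (i < n.+1)%N, (j < n.+1)%N & (k < n.+1)%N]
   then cc (inord i) (inord j) (inord k) else 0).
exists n.+1; split.
  move=> i j k h; case: ifP => // /and3P[a b d].
  by move: h a b d; lia.
rewrite /ms big_mkord; apply: eq_bigr => i _; rewrite big_mkord; apply: eq_bigr => j _.
rewrite big_mkord; apply: eq_bigr => k _.
by rewrite !ltn_ord /= !inord_val.
Qed.

Lemma ms_indep n a : ms n a = 0 ->
  forall i j k, (i < n)%N -> (j < n)%N -> (k < n)%N -> a i j k = 0.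
Proof.
move=> h i j k hi hj hk; have [_ ind] := Hpbw.
have e : (\sum_(i0 < n) \sum_(j0 < n) \sum_(k0 < n) a i0 j0 k0 *: mono i0 j0 k0) = ms n a.
  rewrite /ms big_mkord; apply: eq_bigr => i0 _; rewrite big_mkord; apply: eq_bigr => j0 _.
  by rewrite big_mkord.
rewrite h in e.
exact: (ind n (fun i j k : 'I_n => a i j k) e (Ordinal hi) (Ordinal hj) (Ordinal hk)).
Qed.

Lemma Rep_unique {x a b} : Rep x a -> Rep x b -> forall i j k, a i j k = b i j k.
Proof.
move=> ra rb i j k.
have := Rep_lin (-1) rb ra; case=> n [hn e].
have rx : Rep x a by [].
case: ra => na [ha _]; case: rb => nb [hb _].
have [lt|ge] := boolP [&& (i < maxn na nb)%N, (j < maxn na nb)%N & (k < maxn na nb)%N].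
  case/and3P: lt => li lj lk.
  have : ms (maxn (maxn na nb) n) (fun i j k => -1 * b i j k + a i j k) = 0.
    by rewrite (ms_pad hn (leq_maxr _ _)) -e scaleN1r addNr.
  move/ms_indep => /(_ i j k).
  rewrite !(leq_trans _ (leq_maxl _ n)) // => /(_ isT isT isT).
  by rewrite mulN1r addrC => /subr0_eq.
rewrite (bnd_le ha (leq_maxl na nb)) ?(bnd_le hb (leq_maxr na nb)) //;
  by move: ge; lia.
Qed.

Lemma Rep_eq0 {x a} : (forall i j k, a i j k = 0) -> Rep x a -> x = 0.
Proof.
move=> a0 [n [_ ->]]; rewrite /ms; apply: big1 => i _; apply: big1 => j _.
by apply: big1 => k _; rewrite a0 scale0r.
Qed.

Lemma Rep0_coef {a} : Rep 0 a -> forall i j k, a i j k = 0.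
Proof. by move=> r i j k; rewrite (Rep_unique r Rep0). Qed.

Lemma HF_rel : H * F = F * H - F.
Proof.
case: Hrel => _ _ h3.
by rewrite -h3 addrC subrK.
Qed.

Lemma EH_rel : E * H = H * E - E.
Proof.
case: Hrel => _ h2 _.
have h := congr1 (fun z => H * E - z) h2.
by rewrite /= opprB addrC subrK in h; rewrite h.
Qed.

Lemma HFi i : H * F ^+ i = F ^+ i * H - F ^+ i *+ i.
Proof.
elim: i => [|i IH]; first by rewrite !expr0 mulr1 mul1r mulr0n subr0.
rewrite exprSr mulrA IH mulrBl -[F ^+ i * H * F]mulrA HF_rel mulrBr !mulrA mulrnAl -exprSr.
by rewrite mulrS opprD addrA.
Qed.

Lemma EkH k : E ^+ k * H = H * E ^+ k - E ^+ k *+ k.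
Proof.
elim: k => [|k IH]; first by rewrite !expr0 mulr1 mul1r mulr0n subr0.
rewrite exprS -mulrA IH mulrBr [E * (H * _)]mulrA EH_rel mulrBl -[H * E * _]mulrA -exprS mulrnAr -exprS.
by rewrite mulrS opprD addrA.
Qed.

Lemma comm_mono i j k :
  H * mono i j k - mono i j k * H = (k%:R - i%:R) *: mono i j k.
Proof.
rewrite /mono !mulrA HFi mulrBl mulrBl -!mulrA EkH mulrBr mulrBr.
rewrite mulrnAl !mulrnAr [H * (H ^+ j * _)]mulrA -exprS [H ^+ j * (H * _)]mulrA -exprSr.
by rewrite scalerBl !scaler_nat opprB addrC addrA subrK.
Qed.

Lemma Rep_Hcomm {x a} : Rep x a ->
  Rep (H * x - x * H) (fun i j k => (k%:R - i%:R) * a i j k).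
Proof.
move=> [n [hb ->]]; exists n; split.
  by move=> i j k h; rewrite hb // mulr0.
rewrite /ms mulr_sumr mulr_suml -sumrB; apply: eq_bigr => i _.
rewrite mulr_sumr mulr_suml -sumrB; apply: eq_bigr => j _.
rewrite mulr_sumr mulr_suml -sumrB; apply: eq_bigr => k _.
by rewrite -scalerAr -scalerAl -scalerBr comm_mono scalerA mulrC.
Qed.

Lemma monoE i j k : mono i j k * E = mono i j k.+1.
Proof. by rewrite /mono -mulrA -exprSr. Qed.

Lemma Rep_mulE x a : Rep x a ->
  Rep (x * E) (fun i j k => if k is k'.+1 then a i j k' else 0).
Proof.
move=> [n [hb ->]]; exists n.+1; split.
  move=> i j [|k] h //; apply: hb; move: h; lia.
rewrite -(ms_pad hb (leqnSn n)) /ms mulr_suml; apply: eq_bigr => i _.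
rewrite mulr_suml; apply: eq_bigr => j _.
rewrite mulr_suml [LHS]big_nat_recr // [RHS]big_nat_recl //= scale0r add0r.
rewrite hb ?leqnn ?orbT // scale0r mul0r addr0.
by apply: eq_bigr => k _; rewrite -scalerAl monoE.
Qed.

Lemma sum_delta (G : nat -> A) a n : (a < n)%N ->
  \sum_(0 <= i < n) (if i == a then G i else 0) = G a.
Proof. by move=> an; rewrite big_mkord -big_mkcond /= big_ord1_eq an. Qed.

Lemma Rep_delta a b d :
  Rep (mono a b d) (fun i j k => ((i == a) && (j == b) && (k == d))%:R).
Proof.
exists (maxn a (maxn b d)).+1; split.
  move=> i j k h.
  have -> : ((i == a) && (j == b) && (k == d)) = false.
    by apply/negbTE; move: h; lia.
  by [].
rewrite /ms.
rewrite (eq_bigr (fun i => if i == a then \sum_(0 <= j < (maxn a (maxn b d)).+1)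
   \sum_(0 <= k < (maxn a (maxn b d)).+1) ((j == b) && (k == d))%:R *: mono a j k else 0)); last first.
  move=> i _; case: eqP => [->|ne].
    by apply: eq_bigr => j _; apply: eq_bigr => k _; rewrite ?eqxx.
  by apply: big1 => j _; apply: big1 => k _; rewrite scale0r.
rewrite sum_delta; last by lia.
rewrite (eq_bigr (fun j => if j == b then
   \sum_(0 <= k < (maxn a (maxn b d)).+1) (k == d)%:R *: mono a b k else 0)); last first.
  move=> j _; case: eqP => [->|ne].
    by apply: eq_bigr => k _.
  by apply: big1 => k _; rewrite scale0r.
rewrite sum_delta; last by lia.
rewrite (eq_bigr (fun k => if k == d then mono a b k else 0)); last first.
  by move=> k _; case: eqP => _; rewrite ?scale1r ?scale0r.
by rewrite sum_delta //; lia.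
Qed.

Definition SFH x := exists s : seq (nat * nat * C),
  x = \sum_(t <- s) t.2 *: (F ^+ t.1.1 * H ^+ t.1.2).

Lemma SFH0 : SFH 0.
Proof. by exists [::]; rewrite big_nil. Qed.

Lemma SFH_lin x y (al : C) : SFH x -> SFH y -> SFH (al *: x + y).
Proof.
case=> sx ->; case=> sy ->.
exists ([seq (t.1, al * t.2) | t <- sx] ++ sy).
rewrite big_cat big_map scaler_sumr /=; congr (_ + _).
by apply: eq_bigr => t _; rewrite scalerA.
Qed.

Lemma SFH_add x y : SFH x -> SFH y -> SFH (x + y).
Proof. by move=> hx hy; rewrite -[x]scale1r; apply: SFH_lin. Qed.

Lemma SFH_scale x (al : C) : SFH x -> SFH (al *: x).
Proof. by move=> hx; rewrite -[_ *: _]addr0; apply: SFH_lin => //; apply: SFH0. Qed.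

Lemma SFH_FH a b : SFH (F ^+ a * H ^+ b).
Proof. by exists [:: (a, b, 1)]; rewrite big_seq1 scale1r. Qed.

Lemma SFH1 : SFH 1.
Proof. by have := SFH_FH 0 0; rewrite !expr0 mulr1. Qed.

Lemma SFH_F x : SFH x -> SFH (F * x).
Proof.
case=> s ->; elim: s => [|t s IH]; first by rewrite big_nil mulr0; apply: SFH0.
rewrite big_cons mulrDr; apply: SFH_add => //.
by rewrite -scalerAr mulrA -exprS; apply: SFH_scale; apply: SFH_FH.
Qed.

Lemma SFH_H x : SFH x -> SFH (H * x).
Proof.
case=> s ->; elim: s => [|t s IH]; first by rewrite big_nil mulr0; apply: SFH0.
rewrite big_cons mulrDr; apply: SFH_add => //.
rewrite -scalerAr; apply: SFH_scale.
rewrite mulrA HFi mulrBl -mulrA -exprS mulrnAl -scaler_nat -scaleNr addrC.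
by apply: SFH_lin; apply: SFH_FH.
Qed.

Lemma RFH_SFH {v} : RFH F H v -> SFH v.
Proof.
move=> hv.
have cl : Defs.subalg_closed (fun x => forall y, SFH y -> SFH (x * y)).
  split.
  - by move=> y hy; rewrite mul1r.
  - by move=> x y hx hy z hz; rewrite mulrDl; apply: SFH_add; [apply: hx | apply: hy].
  - by move=> x y hx hy z hz; rewrite -mulrA; apply: hx; apply: hy.
  - by move=> a x hx y hy; rewrite -scalerAl; apply: SFH_scale; apply: hx.
have := hv _ cl SFH_F SFH_H 1 SFH1.
by rewrite mulr1.
Qed.

Lemma SFH_rep {x} : SFH x -> exists b, Rep x b /\ forall i j k, (0 < k)%N -> b i j k = 0.
Proof.
case=> s ->; elim: s => [|t s [b [rb hb]]].
  by exists (fun _ _ _ => 0); rewrite big_nil; split => //; apply: Rep0.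
rewrite big_cons.
have rd := Rep_delta t.1.1 t.1.2 0.
rewrite /mono expr0 mulr1 in rd.
exists (fun i j k => t.2 * ((i == t.1.1) && (j == t.1.2) && (k == 0%N))%:R + b i j k).
split; first exact: Rep_lin.
move=> i j k hk; rewrite (negbTE (lt0n_neq0 hk)) andbF mulr0 add0r.
exact: hb.
Qed.

Definition IdE x := exists w, x = w * (E - c%:A).

Lemma IdE0 : IdE 0.
Proof. by exists 0; rewrite mul0r. Qed.

Lemma IdE_lin x y (al : C) : IdE x -> IdE y -> IdE (al *: x + y).
Proof.
case=> u ->; case=> w ->; exists (al *: u + w).
by rewrite mulrDl scalerAl.
Qed.

Lemma IdE_add x y : IdE x -> IdE y -> IdE (x + y).
Proof. by move=> hx hy; rewrite -[x]scale1r; apply: IdE_lin. Qed.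

Lemma IdE_scale x (al : C) : IdE x -> IdE (al *: x).
Proof. by move=> hx; rewrite -[_ *: _]addr0; apply: IdE_lin => //; apply: IdE0. Qed.

Lemma IdE_sub {x y} : IdE x -> IdE y -> IdE (x - y).
Proof. by move=> hx hy; rewrite addrC -scaleN1r; apply: IdE_lin. Qed.

Lemma IdE_mull r x : IdE x -> IdE (r * x).
Proof. by case=> w ->; exists (r * w); rewrite mulrA. Qed.

Lemma Ek_IdE k : IdE (E ^+ k - (c ^+ k)%:A).
Proof.
elim: k => [|k [w hw]].
  by rewrite !expr0 scale1r subrr; apply: IdE0.
exists (E * w + (c ^+ k)%:A).
rewrite mulrDl -mulrA -hw !mulrBr -exprS mulr_algr mulr_algl mulr_algl scalerA -exprSr.
by rewrite addrA subrK.
Qed.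

Lemma peval_IdE p : p.[c] = 0 -> IdE (peval p E).
Proof.
move=> pc.
have -> : peval p E = \sum_(i < size p) p`_i *: (E ^+ i - (c ^+ i)%:A) + (p.[c])%:A.
  rewrite horner_coef scaler_suml -big_split /=; apply: eq_bigr => i _.
  by rewrite scalerBr scalerA subrK.
rewrite pc scale0r addr0; apply: big_ind => [|x y|i _]; first exact: IdE0.
  exact: IdE_add.
by apply: IdE_scale; apply: Ek_IdE.
Qed.

Lemma R_RE_IdE x : R_RE_eta E c x -> IdE x.
Proof.
case=> n [r [y [hy ->]]]; apply: big_ind => [|u w|i _]; first exact: IdE0.
  exact: IdE_add.
by apply: IdE_mull; case: (hy i) => p [-> hp]; apply: peval_IdE.
Qed.

Lemma IdE_R_RE x : IdE x -> R_RE_eta E c x.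
Proof.
case=> w ->; exists 1%N, (fun _ => w), (fun _ => E - c%:A); split; last by rewrite big_ord1.
move=> _; exists ('X - c%:P); split; last by rewrite hornerXsubC subrr.
rewrite /peval size_XsubC !big_ord_recl big_ord0 /= !coefB !coefX !coefC /= expr0 expr1.
by rewrite sub0r subr0 scale1r addr0 scaleNr addrC.
Qed.

Lemma RFH_1 : RFH F H 1.
Proof. by move=> S [h1 _ _ _]. Qed.
Lemma RFH_F : RFH F H F.
Proof. by move=> S _ hF. Qed.
Lemma RFH_H : RFH F H H.
Proof. by move=> S _ _ hH. Qed.
Lemma RFH_add x y : RFH F H x -> RFH F H y -> RFH F H (x + y).
Proof. by move=> hx hy S cl hF hH; case: (cl) => _ ha _ _; apply: ha; [apply: hx | apply: hy]. Qed.
Lemma RFH_mul x y : RFH F H x -> RFH F H y -> RFH F H (x * y).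
Proof. by move=> hx hy S cl hF hH; case: (cl) => _ _ hm _; apply: hm; [apply: hx | apply: hy]. Qed.
Lemma RFH_scale x (a : C) : RFH F H x -> RFH F H (a *: x).
Proof. by move=> hx S cl hF hH; case: (cl) => _ _ _ hs; apply: hs; apply: hx. Qed.
Lemma RFH_0 : RFH F H 0.
Proof. by rewrite -(scale0r 1); apply: RFH_scale; apply: RFH_1. Qed.
Lemma RFH_sub x y : RFH F H x -> RFH F H y -> RFH F H (x - y).
Proof. by move=> hx hy; apply: RFH_add => //; rewrite -scaleN1r; apply: RFH_scale. Qed.
Lemma RFH_pow x n : RFH F H x -> RFH F H (x ^+ n).
Proof.
move=> hx; elim: n => [|n IH]; first by rewrite expr0; apply: RFH_1.
by rewrite exprS; apply: RFH_mul.
Qed.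

Definition Dec u := exists v, RFH F H v /\ IdE (u - v).

Lemma Dec0 : Dec 0.
Proof. by exists 0; split; [apply: RFH_0 | rewrite subrr; apply: IdE0]. Qed.

Lemma Dec_add x y : Dec x -> Dec y -> Dec (x + y).
Proof.
move=> [vx [hx1 hx2]] [vy [hy1 hy2]].
exists (vx + vy); split; first exact: RFH_add.
by rewrite opprD addrACA; apply: IdE_add.
Qed.

Lemma Dec_sum (I : Type) (r : seq I) (G : I -> A) : (forall i, Dec (G i)) -> Dec (\sum_(i <- r) G i).
Proof.
move=> hG; apply: (big_ind Dec); [exact: Dec0 | exact: Dec_add | by move=> i _].
Qed.

Lemma exists_dec u : Dec u.
Proof.
have [sp _] := Hpbw; have [n [cc ->]] := sp u.
apply: Dec_sum => i; apply: Dec_sum => j; apply: Dec_sum => k.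
exists (cc i j k *: ((c ^+ k) *: (F ^+ i * H ^+ j))); split.
  by apply: RFH_scale; apply: RFH_scale; apply: RFH_mul; apply: RFH_pow; [apply: RFH_F | apply: RFH_H].
rewrite -scalerBr; apply: IdE_scale.
rewrite /mono -mulr_algr -mulrBr; apply: IdE_mull; apply: Ek_IdE.
Qed.

Lemma down (g : nat -> C) i0 n : (forall k, (n <= k)%N -> g k = 0) ->
  (forall k, (i0 <= k)%N -> g k = c * g k.+1) -> forall k, (i0 <= k)%N -> g k = 0.
Proof.
move=> gn rec.
suff h : forall d k, (n <= k + d)%N -> (i0 <= k)%N -> g k = 0.
  by move=> k hk; apply: (h n) => //; apply: leq_addl.
elim=> [|d IH] k hnk hk; first by apply: gn; rewrite addn0 in hnk.
by rewrite rec // IH ?mulr0 //; [rewrite addSnnS | apply: leqW].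
Qed.

Lemma IdE_rep {x} : IdE x -> exists w a n, x = w * (E - c%:A) /\ bnd n a /\ Rep w a /\
  Rep x (fun i j k => -c * a i j k + (if k is k'.+1 then a i j k' else 0)).
Proof.
case=> w hw; have [a ra] := rep_exists w.
have ra' := ra; case: ra' => n [hn _].
exists w, a, n; split => //; split => //; split => //.
have -> : x = - c *: w + w * E by rewrite hw mulrBr mulr_algr addrC scaleNr.
by apply: Rep_lin => //; apply: Rep_mulE.
Qed.

Lemma uniq_dec v : RFH F H v -> IdE v -> v = 0.
Proof.
move=> hv hI.
have [b [rb hb]] := SFH_rep (RFH_SFH hv).
have [w [a [n [hw [hn [ra rv]]]]]] := IdE_rep hI.
have a0 : forall i j k, a i j k = 0.
  move=> i j k0; apply: (@down (a i j) 0 n) => //.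
    by move=> k hk; apply: hn; rewrite hk !orbT.
  move=> k _; have := Rep_unique rb rv i j k.+1.
  rewrite hb // => /esym/eqP; rewrite mulNr addrC subr_eq0 => /eqP.
  by [].
by rewrite hw (Rep_eq0 a0 ra) mul0r.
Qed.

Lemma inj_dec z : H * z = z * H -> IdE z -> c != 0 -> z = 0.
Proof.
move=> hz hI c0.
have [w [a [n [hw [hn [ra rv]]]]]] := IdE_rep hI.
have rc := Rep_Hcomm rv; rewrite hz subrr in rc.
have bz : forall i j k, k != i -> -c * a i j k + (if k is k'.+1 then a i j k' else 0) = 0.
  move=> i j k ne; have := Rep0_coef rc i j k; move/eqP; rewrite mulf_eq0 => /orP[|/eqP //].
  by rewrite subr_eq0 eqr_nat (negbTE ne).
have a0 : forall i j k, a i j k = 0.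
  move=> i j k; have [lt|ge] := ltnP k i.
    elim: k lt => [|k IH] lt.
      by have /eqP := bz i j 0%N (negbT (ltn_eqF lt)) ; rewrite addr0 mulf_eq0 oppr_eq0 (negbTE c0) => /eqP.
    have /eqP := bz i j k.+1 (negbT (ltn_eqF lt)); rewrite IH ?(ltnW lt) // addr0 mulf_eq0 oppr_eq0.
    by rewrite (negbTE c0) => /eqP.
  move: k ge; apply: (@down (a i j) i n).
    by move=> k hk; apply: hn; rewrite hk !orbT.
  move=> k hk; have /eqP := bz i j k.+1 (negbT (gtn_eqF (hk : (i < k.+1)%N))).
  by rewrite mulNr addrC subr_eq0 => /eqP.
by rewrite hw (Rep_eq0 a0 ra) mul0r.
Qed.

Lemma proj_spec u : RFH F H (proj_eta E F H c u) /\ IdE (u - proj_eta E F H c u).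
Proof.
have ex : exists v, RFH F H v /\ R_RE_eta E c (u - v).
  by have [v [h1 h2]] := exists_dec u; exists v; split => //; apply: IdE_R_RE.
have [h1 h2] := epsilon_spec (inhabits 0) _ ex.
by split => //; apply: R_RE_IdE.
Qed.

Lemma proj_eq u v : RFH F H v -> IdE (u - v) -> proj_eta E F H c u = v.
Proof.
move=> hv hu; have [h1 h2] := proj_spec u.
apply/eqP; rewrite -subr_eq0; apply/eqP; apply: uniq_dec; first exact: RFH_sub.
have -> : proj_eta E F H c u - v = (u - v) - (u - proj_eta E F H c u).
  by rewrite opprB [RHS]addrC addrA subrK.
exact: IdE_sub.
Qed.

Lemma main_sec : c != 0 ->
  [/\ proj_eta E F H c 1 = 1,
      forall z w, central z -> central w ->
        proj_eta E F H c (z + w) = proj_eta E F H c z + proj_eta E F H c w,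
      forall (a : C) z, central z ->
        proj_eta E F H c (a *: z) = a *: proj_eta E F H c z,
      forall z w, central z -> central w ->
        proj_eta E F H c (z * w) = proj_eta E F H c z * proj_eta E F H c w
    & forall z w, central z -> central w ->
        proj_eta E F H c z = proj_eta E F H c w -> z = w].
Proof.
move=> c0; split.
- by apply: proj_eq; [apply: RFH_1 | rewrite subrr; apply: IdE0].
- move=> z w _ _; have [z1 z2] := proj_spec z; have [w1 w2] := proj_spec w.
  apply: proj_eq; first exact: RFH_add.
  by rewrite opprD addrACA; apply: IdE_add.
- move=> a z _; have [z1 z2] := proj_spec z.
  apply: proj_eq; first exact: RFH_scale.
  by rewrite -scalerBr; apply: IdE_scale.
- move=> z w hz hw; have [z1 z2] := proj_spec z; have [w1 w2] := proj_spec w.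
  apply: proj_eq; first exact: RFH_mul.
  set pz := proj_eta E F H c z; set pw := proj_eta E F H c w.
  have -> : z * w - pz * pw = w * (z - pz) + pz * (w - pw).
    by rewrite !mulrBr (hw pz) addrA subrK (hw z).
  by apply: IdE_add; apply: IdE_mull.
- move=> z w hz hw e; have [z1 z2] := proj_spec z; have [w1 w2] := proj_spec w.
  apply/eqP; rewrite -subr_eq0; apply/eqP; apply: inj_dec => //.
    by rewrite mulrBr mulrBl hz hw.
  rewrite e in z2; have -> : z - w = (z - proj_eta E F H c w) - (w - proj_eta E F H c w).
    by rewrite opprB addrA subrK.
  exact: IdE_sub.
Qed.

End Main.

Theorem mainTheorem15 (f : {poly C}) (A : algType C) (E F H : A) (c : C) :
  Rf_relations E F H f -> PBW_basis E F H -> c != 0 ->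
  [/\ proj_eta E F H c 1 = 1,
      forall z w, central z -> central w ->
        proj_eta E F H c (z + w) = proj_eta E F H c z + proj_eta E F H c w,
      forall (a : C) z, central z ->
        proj_eta E F H c (a *: z) = a *: proj_eta E F H c z,
      forall z w, central z -> central w ->
        proj_eta E F H c (z * w) = proj_eta E F H c z * proj_eta E F H c w
    & forall z w, central z -> central w ->
        proj_eta E F H c z = proj_eta E F H c w -> z = w].
Proof.
move=> hr hp c0; exact: (@main_sec f A E F H c hr hp c0).
Qed.
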